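(* Fix an architecture $(\mathbf d,\mathbf k,\mathbf s)$ of depth $N$ and let $k_v=k_1+\sum_{i=2}^N(k_i-1)\prod_{m=1}^{i-1}s_m$. For every $T>0$ and all real numbers $\delta_1,\dots,\delta_{N-1}$ there exists a constant $\tau=\tau(T,k_v,\delta_1,\dots,\delta_{N-1})$ such that the following holds: whenever $\vec w=(w^{(1)},\dots,w^{(N)})$ with $w^{(i)}\in\mathbb{R}^{k_i}$ satisfies $\|\pi(\vec w)\|_1\le T$ and $\|w^{(i+1)}\|_2^2-\|w^{(i)}\|_2^2=\delta_i$ for $i=1,\dots,N-1$, then \[ \|w^{(i)}\|_2^2\le\tau\qquad\text{for all } i\in\{1,\dots,N\}. \]
   Context: An architecture of depth $N$ is a triple $(\mathbf d,\mathbf k,\mathbf s)=((d_0,\dots,d_N),(k_1,\dots,k_N),(s_1,\dots,s_N))$ of positive integers with $d_i=\frac{d_{i-1}-k_i}{s_i}+1$ for $i=1,\dots,N$. For a filter $w\in\mathbb{R}^{k}$ and stride $s$, the convolutional matrix $\Pi_{(d',d''),k,s}(w)\in\mathbb{R}^{d''\times d'}$ has entries $W_{j,(j-1)s+n}=w_n$ for $j\in\{1,\dots,d''\}$, $n\in\{1,\dots,k\}$, and zeros elsewhere. For $\vec w=(w^{(1)},\dots,w^{(N)})$, $\Pi(\vec w):=W_N\cdots W_1$ with $W_i=\Pi_{(d_{i-1},d_i),k_i,s_i}(w^{(i)})$; this is a convolutional matrix with stride $\prod_i s_i$ and filter width $k_v$, and its filter $v=\pi(\vec w)\in\mathbb{R}^{k_v}$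 is the final filter. Equivalently, $\sum_{j=0}^{k_v-1}v_{j+1}x^j=\prod_{i=1}^N\sum_{j=0}^{k_i-1}w^{(i)}_{j+1}x^{j\prod_{n=1}^{i-1}s_n}$. $\|\cdot\|_1$ and $\|\cdot\|_2$ are the usual vector norms. *)

(* Defs.v *)
From HB Require Import structures.
From mathcomp Require Import all_boot all_order all_algebra.
Set Implicit Arguments. Unset Strict Implicit. Unset Printing Implicit Defensive.
Import Order.TTheory GRing.Theory Num.Theory.
Local Open Scope ring_scope.

(* An architecture of depth N: d indexed by 0..N, k and s indexed by 1..N
   (values of d, k, s outside these ranges are irrelevant). *)
Definition is_architecture (N : nat) (d k s : nat -> nat) : Prop :=
  (forall i, (i <= N)%N -> (0 < d i)%N) /\
  (forall i, (1 <= i <= N)%N ->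
     [/\ (0 < k i)%N, (0 < s i)%N, (k i <= d i.-1)%N,
         (s i %| d i.-1 - k i)%N & d i = ((d i.-1 - k i) %/ s i).+1]).

Definition stride_before (s : nat -> nat) (i : nat) : nat :=
  (\prod_(1 <= m < i) s m)%N.

Definition kv (N : nat) (k s : nat -> nat) : nat :=
  (k 1 + \sum_(2 <= i < N.+1) (k i - 1) * stride_before s i)%N.

Definition layer_poly (R : nzRingType) (s : nat -> nat) (i : nat) (wi : seq R)
  : {poly R} :=
  \sum_(j < size wi) wi`_j *: 'X^(j * stride_before s i).

Definition final_poly (R : comNzRingType) (N : nat) (s : nat -> nat)
  (w : nat -> seq R) : {poly R} :=
  \prod_(1 <= i < N.+1) layer_poly s i (w i).

(* the final filter v = pi(w) in R^{k_v}: v_{j+1} = coefficient of x^j *)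
Definition final_filter (R : comNzRingType) (N : nat) (k s : nat -> nat)
  (w : nat -> seq R) : seq R :=
  mkseq (fun j => (final_poly N s w)`_j) (kv N k s).

Definition norm1 (R : numDomainType) (v : seq R) : R := \sum_(x <- v) `|x|.
Definition norm2sq (R : numDomainType) (v : seq R) : R := \sum_(x <- v) x ^+ 2.

(* Main.v *)
Require Import Defs.
From HB Require Import structures.
From mathcomp Require Import all_boot all_order all_algebra.
From mathcomp Require Import reals.
From mathcomp Require Import zify ring lra.
Import Order.TTheory GRing.Theory Num.Theory.
Local Open Scope ring_scope.

Set Implicit Arguments. Unset Strict Implicit. Unset Printing Implicit Defensive.

Lemma size_prod_le (F : fieldType) (I : Type) (r : seq I) (P : pred I)
  (p : I -> {poly F}) :
  (size (\prod_(i <- r | P i) p i)%R <= (\sum_(i <- r | P i) (size (p i)).-1).+1)%N.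
Proof.
elim: r => [|a r IH]; first by rewrite !big_nil size_poly1.
rewrite !big_cons; case: (P a) => //.
apply: leq_trans (size_polyMleq _ _) _; lia.
Qed.

Definition lag (F : fieldType) (M : nat) (x : 'I_M -> F) (J : {set 'I_M})
  (l : 'I_M) : {poly F} :=
  (\prod_(m in J | m != l) (x l - x m))^-1 *:
    \prod_(m in J | m != l) ('X - (x m)%:P).

Lemma size_lag (F : fieldType) (M : nat) (x : 'I_M -> F) (J : {set 'I_M})
  (l : 'I_M) : l \in J -> (size (lag x J l) <= #|J|)%N.
Proof.
move=> lJ; apply: leq_trans (size_scale_leq _ _) _.
apply: leq_trans (size_prod_le _ _ _) _.
have -> : (\sum_(i in J | i != l) (size ('X - (x i)%:P)%R).-1 =
          \sum_(i in J | i != l) 1)%N.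
  by apply: eq_bigr => i _; rewrite size_XsubC.
have := sum1_card (mem J); rewrite (bigD1 l) //=.
by move=> <-.
Qed.

Lemma hprod (F : fieldType) (M : nat) (x : 'I_M -> F) (J : {set 'I_M})
  (l : 'I_M) (y : F) :
  (\prod_(m in J | m != l) ('X - (x m)%:P)).[y] = \prod_(m in J | m != l) (y - x m).
Proof. rewrite horner_prod; apply: eq_bigr => i _; exact: hornerXsubC. Qed.

Lemma horner_lag (F : fieldType) (M : nat) (x : 'I_M -> F) (J : {set 'I_M})
  (l m : 'I_M) : injective x -> l \in J -> m \in J ->
  (lag x J l).[x m] = (m == l)%:R.
Proof.
move=> xi lJ mJ; rewrite /lag hornerZ hprod.
have [->|ml] := eqVneq m l.
  rewrite mulVf //; apply/prodf_neq0 => i /andP[_ il].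
  by rewrite subr_eq0; apply: contra il => /eqP/xi ->.
rewrite [X in _ * X](bigD1 m) /=; last by rewrite mJ ml.
by rewrite subrr mul0r mulr0.
Qed.

Lemma interp (F : fieldType) (M : nat) (x : 'I_M -> F) (J : {set 'I_M})
  (f : {poly F}) : injective x -> (size f <= #|J|)%N ->
  f = \sum_(l in J) f.[x l] *: lag x J l.
Proof.
move=> xi hf; apply/eqP; rewrite -subr_eq0; apply/negPn/negP => g0.
set g := _ - _ in g0.
have hg : (size g <= #|J|)%N.
  apply/leq_sizeP => j hj; rewrite coefB coef_sum (leq_sizeP _ _ hf) //.
  rewrite big1 ?subrr // => l lJ; rewrite coefZ.
  by rewrite (leq_sizeP _ _ (size_lag x lJ)) ?mulr0.
have h1 : all (root g) (map x (enum J)).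
  apply/allP => y /mapP[m]; rewrite mem_enum => mJ ->.
  rewrite /root /g hornerD hornerN horner_sum.
  rewrite (bigD1 m) //= hornerZ horner_lag // eqxx mulr1.
  rewrite big1 ?addr0 ?subrr // => l /andP[lJ lm].
  by rewrite hornerZ horner_lag // eq_sym (negPf lm) mulr0.
have h2 : uniq (map x (enum J)) by rewrite map_inj_uniq // enum_uniq.
have := max_poly_roots g0 h1 h2.
by rewrite size_map -cardE ltnNge hg.
Qed.


Definition CJ (R : realFieldType) (M : nat) (x : 'I_M -> R) (J : {set 'I_M}) : R :=
  \sum_(l in J) \sum_(j < M) `|(lag x J l)`_j|.
Definition Cst (R : realFieldType) (M : nat) (x : 'I_M -> R) : R :=
  \sum_(J : {set 'I_M}) CJ x J.

Lemma CJ_ge0 (R : realFieldType) (M : nat) (x : 'I_M -> R) J : 0 <= CJ x J.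
Proof. by apply: sumr_ge0 => l _; apply: sumr_ge0. Qed.

Lemma Cst_ge0 (R : realFieldType) (M : nat) (x : 'I_M -> R) : 0 <= Cst x.
Proof. by apply: sumr_ge0 => J _; apply: CJ_ge0. Qed.

Lemma CJ_le (R : realFieldType) (M : nat) (x : 'I_M -> R) J : CJ x J <= Cst x.
Proof.
rewrite /Cst (bigD1 J) //= lerDl; apply: sumr_ge0 => J' _; apply: CJ_ge0.
Qed.

Definition badset (R : realFieldType) (M : nat) (x : 'I_M -> R) (f : {poly R})
  (j0 : nat) : {set 'I_M} :=
  [set l : 'I_M | (Cst x + 1) * `|f.[x l]| < `|f`_j0|].

Lemma bad_card (R : realFieldType) (M : nat) (x : 'I_M -> R) (f : {poly R})
  (K j0 : nat) : injective x -> (0 < K)%N -> (size f <= K)%N -> (j0 < M)%N ->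
  (#|badset x f j0| < K)%N.
Proof.
move=> xi K0 hf hj; set B := badset x f j0; rewrite ltnNge; apply/negP => hB.
have [l0 lB0] : exists l, l \in B.
  by apply/set0Pn; rewrite -card_gt0; apply: leq_trans hB.
have C0 := Cst_ge0 x.
set a := `|f`_j0|.
have a0 : 0 < a.
  move: lB0; rewrite /B /badset inE => h; apply: le_lt_trans h.
  by apply: mulr_ge0 => //; lra.
have Ej : f`_j0 = \sum_(l in B) f.[x l] * (lag x B l)`_j0.
  rewrite {1}(interp xi (leq_trans hf hB)) coef_sum.
  by apply: eq_bigr => l _; rewrite coefZ.
have key : (Cst x + 1) * a <= a * Cst x.
  have -> : (Cst x + 1) * a =
    (Cst x + 1) * `|\sum_(l in B) f.[x l] * (lag x B l)`_j0| by rewrite /a Ej.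
  apply: le_trans (ler_wpM2l _ (ler_norm_sum _ _ _)) _.
    lra.
  rewrite mulr_sumr.
  apply: (@le_trans _ _ (\sum_(l in B) a * `|(lag x B l)`_j0|)).
    apply: ler_sum => l lB; rewrite normrM mulrA; apply: ler_wpM2r => //.
    by move: lB; rewrite /B /badset inE => /ltW.
  rewrite -mulr_sumr ler_pM2l //.
  apply: le_trans (CJ_le x B); apply: ler_sum => l lB.
  by rewrite (bigD1 (Ordinal hj)) //= lerDl; apply: sumr_ge0.
nra.
Qed.


Local Close Scope ring_scope.

Lemma card_U (M : nat) (B : nat -> {set 'I_M}) (r : seq nat) :
  #|\bigcup_(i <- r) B i| <= \sum_(i <- r) #|B i|.
Proof.
elim: r => [|a r IH]; first by rewrite !big_nil cards0.
rewrite !big_cons cardsU; lia.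
Qed.

Lemma sub_U (M : nat) (B : nat -> {set 'I_M}) (r : seq nat) i :
  i \in r -> B i \subset \bigcup_(j <- r) B j.
Proof.
elim: r => [|a r IH] //; rewrite in_cons big_cons => /orP[/eqP->|/IH h].
  exact: subsetUl.
by apply: subset_trans h (subsetUr _ _).
Qed.

Lemma good_point (M N K : nat) (B : nat -> {set 'I_M}) :
  (forall i, 1 <= i <= N -> #|B i| < K) -> 0 < N -> N * K <= M ->
  exists l : 'I_M, forall i, 1 <= i <= N -> l \notin B i.
Proof.
move=> hB N0 hM.
set U := \bigcup_(j <- index_iota 1 N.+1) B j.
have hU : #|U| < M.
  apply: leq_ltn_trans (card_U B _) _.
  apply: (@leq_ltn_trans (\sum_(1 <= i < N.+1) K.-1)).
    rewrite big_nat [X in _ <= X]big_nat; apply: leq_sum => i /hB; lia.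
  rewrite sum_nat_const_nat.
  have K0 : 0 < K by case: K hB hM => // /(_ 1); rewrite N0 /= => /(_ isT).
  nia.
have : 0 < #|~: U|.
  have := cardsC U; rewrite card_ord; lia.
rewrite card_gt0 => /set0Pn[l]; rewrite inE => lU.
exists l => i hi; apply: contra lU; apply/subsetP.
by apply: sub_U; rewrite mem_index_iota; lia.
Qed.
Local Open Scope ring_scope.



Lemma coef_layer (R : nzRingType) s i (wi : seq R) n :
  (layer_poly s i wi)`_n = \sum_(j < size wi) wi`_j * (n == j * stride_before s i)%N%:R.
Proof.
rewrite /layer_poly coef_sum; apply: eq_bigr => j _; by rewrite coefZ coefXn.
Qed.

Lemma coef_layer_at (R : nzRingType) s i (wi : seq R) j :
  (0 < stride_before s i)%N -> (j < size wi)%N ->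
  (layer_poly s i wi)`_(j * stride_before s i) = wi`_j.
Proof.
move=> st0 hj; rewrite coef_layer (bigD1 (Ordinal hj)) //= eqxx mulr1.
rewrite big1 ?addr0 // => j' hj'; rewrite eqn_pmul2r //.
case: eqP => [h|_]; last by rewrite mulr0.
by exfalso; move/eqP: hj'; apply; apply/val_inj => /=; rewrite h.
Qed.

Lemma size_layer (R : nzRingType) s i (wi : seq R) :
  (size (layer_poly s i wi) <= ((size wi).-1 * stride_before s i).+1)%N.
Proof.
apply/leq_sizeP => n hn; rewrite coef_layer big1 // => j _.
have : (j * stride_before s i <= (size wi).-1 * stride_before s i)%N.
  apply: leq_mul => //; have := ltn_ord j; lia.
move=> h; have -> : (n == j * stride_before s i)%N = false by apply/negbTE; lia.
by rewrite mulr0.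
Qed.

Lemma size_final (R : realFieldType) N s (w : nat -> seq R) :
  (size (final_poly N s w) <=
   (\sum_(1 <= i < N.+1) (size (w i)).-1 * stride_before s i).+1)%N.
Proof.
rewrite /final_poly; apply: leq_trans (size_prod_le _ _ _) _.
rewrite ltnS; apply: leq_sum => i _.
rewrite -subn1 leq_subLR add1n; exact: size_layer.
Qed.

Lemma norm1_mkseq (R : numDomainType) (F : nat -> R) n :
  norm1 (mkseq F n) = \sum_(j < n) `|F j|.
Proof.
rewrite /norm1 /mkseq.
have -> : iota 0 n = index_iota 0 n by rewrite /index_iota subn0.
by rewrite big_map big_mkord.
Qed.

Lemma eval_bound (R : realFieldType) N k s (w : nat -> seq R) (y : R) :
  `|y| <= 1 -> (size (final_poly N s w) <= kv N k s)%N ->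
  `|(final_poly N s w).[y]| <= norm1 (final_filter N k s w).
Proof.
move=> hy hs; rewrite /final_filter norm1_mkseq (horner_coef_wide _ hs).
apply: le_trans (ler_norm_sum _ _ _) _; apply: ler_sum => j _.
rewrite normrM normrX; apply: ler_piMr => //.
by apply: exprn_ile1.
Qed.


Lemma st_pos N d k s i : is_architecture N d k s -> (i <= N.+1)%N ->
  (0 < stride_before s i)%N.
Proof.
move=> [_ ha] hi; rewrite /stride_before big_seq; apply: prodn_cond_gt0 => m.
rewrite mem_index_iota => hm; have hm' : (1 <= m <= N)%N by lia.
by case: (ha m hm').
Qed.

Lemma kv_sum N d k s : is_architecture N d k s -> (0 < N)%N ->
  ((\sum_(1 <= i < N.+1) (k i).-1 * stride_before s i).+1 = kv N k s)%N.
Proof.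
move=> ha N0; have h1 : (1 <= 1 <= N)%N by lia.
have [k0 _ _ _ _] := ha.2 1%N h1.
rewrite /kv big_ltn ?ltnS // /stride_before big_geq // muln1.
under [in RHS]eq_bigr => i _ do rewrite subn1.
lia.
Qed.

Lemma term_le N d k s i : is_architecture N d k s -> (1 <= i <= N)%N ->
  (((k i).-1 * stride_before s i).+1 <= kv N k s)%N.
Proof.
move=> ha hi; rewrite -(kv_sum ha) ?ltnS; last by lia.
rewrite (bigD1_seq i) /= ?mem_index_iota ?iota_uniq //; first exact: leq_addr.
Qed.

Fixpoint amax (R : realDomainType) (s : seq R) : nat :=
  if s is a :: t then
    if (0 < size t)%N && (a ^+ 2 < t`_(amax t) ^+ 2) then (amax t).+1 else 0%N
  else 0%N.

Lemma amaxP (R : realDomainType) (s : seq R) : (0 < size s)%N ->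
  (amax s < size s)%N /\ norm2sq s <= (size s)%:R * s`_(amax s) ^+ 2.
Proof.
elim: s => [|a t IH] // _.
have -> : amax (a :: t) = if (0 < size t)%N && (a ^+ 2 < t`_(amax t) ^+ 2)
  then (amax t).+1 else 0%N by [].
rewrite /norm2sq big_cons -/(norm2sq t).
case: (posnP (size t)) => [t0|tpos].
  move/eqP: t0; rewrite size_eq0 => /eqP ->.
  by rewrite /= /norm2sq big_nil addr0 mul1r.
have [h1 h2] := IH tpos; rewrite /=.
case: ifP => [hlt|hge].
  split; first by [].
  rewrite -[(size t).+1]addn1 natrD mulrDl mul1r addrC.
  apply: lerD => //; exact: ltW.
have hle : t`_(amax t) ^+ 2 <= a ^+ 2.
  by rewrite leNgt; apply/negP => h; move: hge; rewrite h.
split; first by [].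
rewrite -[(size t).+1]addn1 natrD mulrDl mul1r addrC.
apply: lerD => //; apply: le_trans h2 _; apply: ler_wpM2l => //.
Qed.


Lemma tele (R : realDomainType) N (r : nat -> R) (delta : nat -> R) :
  (forall i, (1 <= i <= N.-1)%N -> r i.+1 - r i = delta i) ->
  forall j, (1 <= j <= N)%N -> `|r j - r 1%N| <= \sum_(1 <= l < N) `|delta l|.
Proof.
move=> hd.
have H : forall j, (1 <= j <= N)%N -> `|r j - r 1%N| <= \sum_(1 <= l < j) `|delta l|.
  elim=> [|j IH] // hj.
  case: (posnP j) => [->|jpos].
    by rewrite subrr normr0 big_geq.
  rewrite big_nat_recr //=.
  have -> : r j.+1 - r 1%N = delta j + (r j - r 1%N).
    rewrite -(hd j); [ring | lia].
  apply: le_trans (ler_normD _ _) _; rewrite addrC; apply: lerD => //.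
  apply: IH; lia.
move=> j hj; apply: le_trans (H j hj) _.
rewrite [X in _ <= X](big_cat_nat (n := j)) /=; [|lia|lia].
rewrite lerDl; apply: sumr_ge0 => l _; exact: normr_ge0.
Qed.

Unset Implicit Arguments. Set Strict Implicit. Set Printing Implicit Defensive.

Theorem lemma3p5 (R : realType) (N K : nat) (T : R) (delta : nat -> R) :
  0 < T ->
  exists tau : R,
    forall (d k s : nat -> nat),
      is_architecture N d k s -> kv N k s = K ->
      forall w : nat -> seq R,
        (forall i, (1 <= i <= N)%N -> size (w i) = k i) ->
        norm1 (final_filter N k s w) <= T ->
        (forall i, (1 <= i <= N.-1)%N ->
           norm2sq (w i.+1) - norm2sq (w i) = delta i) ->
        forall i, (1 <= i <= N)%N -> norm2sq (w i) <= tau.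
Proof.
move=> hT.
pose M := (N * K)%N.
pose x : 'I_M -> R := fun l => ((l : nat).+1%:R)^-1.
have xi : injective x.
  move=> a b /= /invr_inj /eqP; rewrite eqr_nat eqSS => /eqP h.
  exact: val_inj.
have xb : forall l, `|x l| <= 1.
  move=> l; rewrite ger0_norm ?invr_ge0 // invf_le1 ?ltr0Sn //.
  by rewrite ler1n.
pose C := Cst x.
have C0 : 0 <= C := Cst_ge0 x.
pose A := T * (C + 1) ^+ N.
have A0 : 0 <= A by apply: mulr_ge0; [lra | apply: exprn_ge0; lra].
pose S := \sum_(1 <= l < N) `|delta l|.
exists (K%:R + K%:R * A ^+ 2 + 2 * S).
move=> d k s ha hkv w hsz hn1 hdel i hi.
have N0 : (0 < N)%N by lia.
have K0 : (0 < K)%N by rewrite -hkv; have := term_le ha hi; apply: leq_ltn_trans.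
rewrite leNgt; apply/negP => hr.
pose f j := layer_poly s j (w j).
pose st j := stride_before s j.
pose id j := amax (w j).
pose m j := `|(w j)`_(id j)|.
have hst : forall j, (1 <= j <= N)%N -> (0 < st j)%N.
  by move=> j hj; apply: (st_pos ha); lia.
have hkK : forall j, (1 <= j <= N)%N -> (k j <= K)%N.
  move=> j hj; have := term_le ha hj; have := hst j hj; rewrite hkv /st; nia.
have hid : forall j, (1 <= j <= N)%N ->
    (id j < k j)%N /\ norm2sq (w j) <= (k j)%:R * m j ^+ 2.
  move=> j hj; have kj : (0 < size (w j))%N.
    by rewrite hsz //; case: (ha.2 j hj).
  have [h1 h2] := amaxP kj; rewrite -hsz //; split => //.
  by rewrite /m real_normK ?num_real.
have hsizef : forall j, (1 <= j <= N)%N -> (size (f j) <= K)%N.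
  move=> j hj; apply: leq_trans (size_layer _ _ _) _.
  by rewrite hsz // -hkv; apply: term_le ha hj.
have hcoef : forall j, (1 <= j <= N)%N -> (f j)`_(id j * st j) = (w j)`_(id j).
  by move=> j hj; apply: coef_layer_at; [apply: hst | rewrite hsz //; case: (hid j hj)].
have hidx : forall j, (1 <= j <= N)%N -> (id j * st j < M)%N.
  move=> j hj; have := term_le ha hj; have [h1 _] := hid j hj.
  have : (id j * st j <= (k j).-1 * st j)%N by apply: leq_mul => //; lia.
  rewrite /M hkv /st; nia.
pose B j := badset x (f j) (id j * st j).
have hB : forall j, (1 <= j <= N)%N -> (#|B j| < K)%N.
  by move=> j hj; apply: bad_card => //; [apply: hsizef | apply: hidx].
have [l hl] := good_point hB N0 (leqnn M).
have hgood : forall j, (1 <= j <= N)%N -> m j <= (C + 1) * `|(f j).[x l]|.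
  move=> j hj; have := hl j hj; rewrite /B /badset inE -leNgt hcoef //.
have htel := tele hdel.
have hm : forall j, (1 <= j <= N)%N -> 1 < m j /\ A < m j.
  move=> j hj.
  have := htel j hj; have := htel i hi; rewrite -/S !ler_norml.
  move=> /andP[h1 h2] /andP[h3 h4].
  have [_ h5] := hid j hj.
  have h6 : (k j)%:R <= K%:R :> R by rewrite ler_nat; apply: hkK.
  have h7 : 0 < K%:R :> R by rewrite ltr0n.
  have m0 : 0 <= m j by apply: normr_ge0.
  have h8 : K%:R * (1 + A ^+ 2) < K%:R * m j ^+ 2 by nra.
  have h9 : 1 + A ^+ 2 < m j ^+ 2 by rewrite -(ltr_pM2l h7).
  split; nra.
have hsP : (size (final_poly N s w) <= kv N k s)%N.
  apply: leq_trans (size_final _ _ _) _; rewrite -(kv_sum ha N0) ltnS.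
  rewrite leq_eqVlt; apply/orP; left; apply/eqP; apply: eq_big_nat => j hj.
  by rewrite hsz //; lia.
have hP : `|(final_poly N s w).[x l]| <= T.
  by apply: le_trans hn1; apply: eval_bound.
have hprod : (C + 1) ^+ N * `|(final_poly N s w).[x l]| =
    \prod_(1 <= j < N.+1) ((C + 1) * `|(f j).[x l]|).
  rewrite /final_poly horner_prod normr_prod big_split /= prodr_const_nat.
  by rewrite subSS subn0.
have hge : \prod_(1 <= j < N.+1) m j <= \prod_(1 <= j < N.+1) ((C + 1) * `|(f j).[x l]|).
  rewrite [X in X <= _]big_nat [X in _ <= X]big_nat; apply: ler_prod => j hj.
  by rewrite normr_ge0 /=; apply: hgood.
have hm1 : m 1%N <= \prod_(1 <= j < N.+1) m j.
  rewrite big_ltn // -[X in X <= _]mulr1; apply: ler_wpM2l; first exact: normr_ge0.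
  rewrite big_nat; apply: (big_ind (fun y => 1 <= y)) => //.
    by move=> a b; apply: mulr_ege1.
  move=> j hj; have [h _] := hm j ltac:(lia); exact: ltW.
have [_ hA] := hm 1%N ltac:(lia).
have : A < (C + 1) ^+ N * T.
  apply: lt_le_trans hA _; apply: le_trans hm1 _; apply: le_trans hge _.
  rewrite -hprod; apply: ler_wpM2l => //; apply: exprn_ge0; lra.
rewrite /A mulrC; lra.
Qed.
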